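(* If $L$ is a finitely generated group with subexponential growth and $Q$ is a finitely generated group with finite asymptotic dimension, then the wreath product $L \wr Q = \bigoplus L \rtimes Q$ satisfies \[ \operatorname{asdim}_{\mathrm{se}}(L\wr Q) \leq \operatorname{asdim}(Q). \]
   Context: Groups carry word metrics. $\operatorname{asdim}$ is the usual asymptotic dimension. $\operatorname{asdim}_{\mathrm{se}}(G)$ is the least $d$ such that for every $r\geq 0$, $G=X_0\cup\dots\cup X_d$ with each $X_i$ a disjoint union of pieces pairwise at distance at least $r$, and the pieces (with the induced metric) have uniformly subexponential growth: there is a subexponential non-decreasing $V$ and $C$ with every ball of radius $\rho$ in every piece of cardinality at most $CV(C\rho)+C$. *)

(* Defs.v *)
From Stdlib Require Import Reals List Lra.
Open Scope R_scope.

Record GroupOps := {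
  gcar :> Type;
  gmul : gcar -> gcar -> gcar;
  gone : gcar;
  ginv : gcar -> gcar }.
Arguments gmul {g}. Arguments gone {g}. Arguments ginv {g}.

Definition is_group (G : GroupOps) : Prop :=
  (forall x y z : G, gmul x (gmul y z) = gmul (gmul x y) z) /\
  (forall x : G, gmul gone x = x) /\ (forall x : G, gmul x gone = x) /\
  (forall x : G, gmul (ginv x) x = gone) /\ (forall x : G, gmul x (ginv x) = gone).

Record Group := { gops :> GroupOps; gaxioms : is_group gops }.

Definition is_letter {G : GroupOps} (S : list G) (x : G) : Prop :=
  exists s, In s S /\ (x = s \/ x = ginv s).

Definition prod_list {G : GroupOps} (w : list G) : G := fold_right gmul gone w.

Definition generates {G : GroupOps} (S : list G) : Prop :=
  forall g : G, exists w, Forall (is_letter S) w /\ prod_list w = g.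

Definition word_dist_le {G : GroupOps} (S : list G) (x y : G) (n : nat) : Prop :=
  exists w : list G, (length w <= n)%nat /\ Forall (is_letter S) w /\
                     gmul x (prod_list w) = y.

Definition dist_leR {G : GroupOps} (S : list G) (x y : G) (rho : R) : Prop :=
  exists n, word_dist_le S x y n /\ INR n <= rho.

Definition dist_geR {G : GroupOps} (S : list G) (x y : G) (r : R) : Prop :=
  forall n, word_dist_le S x y n -> r <= INR n.

Definition card_le {T : Type} (P : T -> Prop) (k : R) : Prop :=
  exists l : list T, INR (length l) <= k /\ forall y, P y -> In y l.

Definition subexponential (V : R -> R) : Prop :=
  forall eps, 0 < eps -> exists T, forall t, T <= t -> V t <= exp (eps * t).

Definition nondecreasing (V : R -> R) : Prop := forall s t, s <= t -> V s <= V t.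

Definition subexp_growth {G : GroupOps} (S : list G) : Prop :=
  forall eps, 0 < eps -> exists N : nat, forall n : nat, (N <= n)%nat ->
    card_le (fun y => word_dist_le S gone y n) (exp (eps * INR n)).

Definition r_disjoint {G : GroupOps} (S : list G) {J : Type} (P : J -> G -> Prop)
  (r : R) : Prop :=
  forall j j', j <> j' -> forall x y, P j x -> P j' y -> x <> y /\ dist_geR S x y r.

(* X_i = union_j P i j, i = 0..d, cover G *)
Definition covers {G : GroupOps} {J : Type} (P : nat -> J -> G -> Prop) (d : nat) : Prop :=
  forall g : G, exists i j, (i <= d)%nat /\ P i j g.

Definition asdim_le {G : GroupOps} (S : list G) (d : nat) : Prop :=
  forall r : R, 0 <= r ->
  exists (J : Type) (P : nat -> J -> G -> Prop),
    covers P d /\ (forall i, (i <= d)%nat -> r_disjoint S (P i) r) /\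
    exists D : nat, forall i j x y, (i <= d)%nat -> P i j x -> P i j y ->
                                    word_dist_le S x y D.

Definition asdim_se_le {G : GroupOps} (S : list G) (d : nat) : Prop :=
  forall r : R, 0 <= r ->
  exists (J : Type) (P : nat -> J -> G -> Prop),
    covers P d /\ (forall i, (i <= d)%nat -> r_disjoint S (P i) r) /\
    exists (V : R -> R) (C : R), subexponential V /\ nondecreasing V /\
      forall i j x rho, (i <= d)%nat -> P i j x -> 0 <= rho ->
        card_le (fun y => P i j y /\ dist_leR S x y rho) (C * V (C * rho) + C).

Definition fin_supp {Q L : GroupOps} (f : Q -> L) : Prop :=
  exists s : list Q, forall q, ~ In q s -> f q = gone.

Definition wr_car (L Q : GroupOps) : Type := ({f : Q -> L | fin_supp f} * Q)%type.

Lemma fin_supp_one (L Q : Group) : @fin_supp Q L (fun _ => gone).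
Proof. exists nil; auto. Qed.

Lemma fin_supp_mul (L Q : Group) (f g : Q -> L) (q : Q) :
  fin_supp f -> fin_supp g -> fin_supp (fun x => gmul (f x) (g (gmul (ginv q) x))).
Proof.
  destruct (gaxioms L) as [_ [HL1 _]].
  destruct (gaxioms Q) as [Qa [Q1 [_ [_ Qv]]]].
  intros [sf Hf] [sg Hg]. exists (sf ++ map (gmul q) sg). intros x Hx.
  rewrite Hf, Hg; [apply HL1| |].
  - intro H; apply Hx, in_or_app; right.
    replace x with (gmul q (gmul (ginv q) x)) by (rewrite Qa, Qv, Q1; reflexivity).
    apply in_map; exact H.
  - intro H; apply Hx, in_or_app; left; exact H.
Qed.

Lemma fin_supp_inv (L Q : Group) (f : Q -> L) (q : Q) :
  fin_supp f -> fin_supp (fun x => ginv (f (gmul q x))).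
Proof.
  destruct (gaxioms L) as [_ [HL1 [_ [HLv _]]]].
  destruct (gaxioms Q) as [Qa [Q1 [_ [Qv _]]]].
  intros [sf Hf]. exists (map (gmul (ginv q)) sf). intros x Hx.
  rewrite Hf.
  - rewrite <- (HLv gone) at 2. rewrite (proj1 (proj2 (proj2 (gaxioms L)))). reflexivity.
  - intro H; apply Hx.
    replace x with (gmul (ginv q) (gmul q x)) by (rewrite Qa, Qv, Q1; reflexivity).
    apply in_map; exact H.
Qed.

Definition wr_mul (L Q : Group) (a b : wr_car L Q) : wr_car L Q :=
  let '(exist _ f Hf, q) := a in
  let '(exist _ g Hg, q') := b in
  (exist _ (fun x => gmul (f x) (g (gmul (ginv q) x))) (fin_supp_mul L Q f g q Hf Hg),
   gmul q q').

Definition wr_one (L Q : Group) : wr_car L Q :=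
  (exist _ (fun _ => gone) (fin_supp_one L Q), gone).

Definition wr_inv (L Q : Group) (a : wr_car L Q) : wr_car L Q :=
  let '(exist _ f Hf, q) := a in
  (exist _ (fun x => ginv (f (gmul q x))) (fin_supp_inv L Q f q Hf), ginv q).

Definition wreath (L Q : Group) : GroupOps :=
  {| gcar := wr_car L Q; gmul := wr_mul L Q; gone := wr_one L Q; ginv := wr_inv L Q |}.

(* Main.v *)
Require Import Defs.
From Stdlib Require Import Reals List Lra Lia ZArith Classical ClassicalEpsilon ClassicalDescription ProofIrrelevance FunctionalExtensionality.

Section Gen.
Variable G : GroupOps.

Lemma wdl_mono (S : list G) x y n m : word_dist_le S x y n -> (n <= m)%nat -> word_dist_le S x y m.
Proof. intros [w [H1 [H2 H3]]] H. exists w; repeat split; auto; lia. Qed.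

Fixpoint words (lets : list G) (n : nat) : list (list G) :=
  match n with
  | O => nil :: nil
  | S n => nil :: flat_map (fun a => map (cons a) (words lets n)) lets
  end.

Lemma words_in lets : forall n w, (length w <= n)%nat -> Forall (fun a => In a lets) w -> In w (words lets n).
Proof.
  induction n as [|n IH]; intros w Hl Hf.
  - destruct w; simpl in *; [auto|lia].
  - destruct w as [|a w]; simpl; [auto|]. right. inversion Hf; subst.
    apply in_flat_map. exists a; split; auto. apply in_map. apply IH; simpl in *; auto; lia.
Qed.

Definition ball (S : list G) n := map (@prod_list G) (words (S ++ map ginv S) n).

Lemma ball_in S x y n : word_dist_le S x y n -> In y (map (gmul x) (ball S n)).
Proof.
  intros [w [H1 [H2 H3]]]. subst y. apply in_map. unfold ball. apply in_map.
  apply words_in; auto. eapply Forall_impl; [|exact H2]. intros a [s [Hs [->| ->]]];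
  apply in_or_app; [left; auto | right; apply in_map; auto].
Qed.

Lemma fin_max {T} (Pr : T -> nat -> Prop) (l : list T) :
  (forall t n m, Pr t n -> (n <= m)%nat -> Pr t m) -> (forall t, In t l -> exists n, Pr t n) ->
  exists N, forall t, In t l -> Pr t N.
Proof.
  intros Hm. induction l as [|a l IH]; intros H.
  - exists O; simpl; tauto.
  - destruct (H a (or_introl eq_refl)) as [na Ha].
    destruct IH as [N HN]. { intros t Ht; apply H; simpl; auto. }
    exists (Nat.max na N). intros t [<-|Ht].
    + eapply Hm; [exact Ha| lia].
    + eapply Hm; [apply HN; auto| lia].
Qed.

Fixpoint cart {A} (ls : list (list A)) : list (list A) :=
  match ls with
  | nil => nil :: nil
  | l :: ls => flat_map (fun a => map (cons a) (cart ls)) l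
  end.

Lemma cart_in {A B} (f : B -> A) (g : B -> list A) (nl : list B) :
  (forall p, In p nl -> In (f p) (g p)) -> In (map f nl) (cart (map g nl)).
Proof.
  induction nl as [|p nl IH]; intros H; simpl; auto.
  apply in_flat_map. exists (f p); split; [apply H; simpl; auto|].
  apply in_map. apply IH. intros; apply H; simpl; auto.
Qed.

Lemma cart_len {A} (ls : list (list A)) m : (forall l, In l ls -> length l = m) ->
  length (cart ls) = Nat.pow m (length ls).
Proof.
  induction ls as [|l ls IH]; intros H; simpl; auto.
  assert (Hc : forall l', length (flat_map (fun a : A => map (cons a) (cart ls)) l') = (length l' * length (cart ls))%nat).
  { induction l' as [|a l' IH']; simpl; auto. rewrite length_app, length_map, IH'. lia. }
  rewrite Hc, IH, (H l); simpl; auto. intros; apply H; simpl; auto.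
Qed.

Lemma map_eq_in {A B} (f g : B -> A) (nl : list B) : map f nl = map g nl -> forall p, In p nl -> f p = g p.
Proof.
  induction nl; simpl; intros H p Hp; [tauto|]. injection H; intros. destruct Hp; subst; auto.
Qed.

End Gen.

Lemma card_le_inj {T K} (P : T -> Prop) (F : T -> K) (lk : list K) (t0 : T) :
  (forall y, P y -> In (F y) lk) -> (forall y z, P y -> P z -> F y = F z -> y = z) ->
  card_le P (INR (length lk)).
Proof.
  intros H1 H2.
  exists (map (fun k => epsilon (inhabits t0) (fun y => P y /\ F y = k)) lk).
  rewrite length_map. split; [lra|]. intros y Hy.
  apply in_map_iff. exists (F y). split; auto.
  pose proof (epsilon_spec (inhabits t0) (fun z => P z /\ F z = F y) (ex_intro _ y (conj Hy eq_refl))) as [Ha Hb].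
  apply H2; auto.
Qed.

Lemma least_nat (P : nat -> Prop) : (exists n, P n) -> exists m, P m /\ forall k, P k -> (m <= k)%nat.
Proof.
  intros [n Hn]. apply NNPP; intro Hno.
  assert (forall k, forall j, (j <= k)%nat -> ~ P j).
  { induction k; intros j Hj Pj.
    - apply Hno; exists j; split; auto; intros; lia.
    - apply Hno; exists j; split; auto. intros k' Hk'. destruct (Compare_dec.le_lt_dec j k'); auto.
      exfalso. apply (IHk k'); auto; lia. }
  apply (H n n); auto.
Qed.

Definition ceilN (t : R) : nat := Z.to_nat (up t).

Lemma up_mono s t : (s <= t)%R -> (up s <= up t)%Z.
Proof.
  intros H. destruct (archimed s) as [A1 A2]. destruct (archimed t) as [B1 B2].
  destruct (ZArith_dec.Z_le_gt_dec (up s) (up t)) as [|Hg]; auto.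
  assert (Hz : (up t <= up s - 1)%Z) by lia. apply IZR_le in Hz. rewrite minus_IZR in Hz. lra.
Qed.

Lemma ceilN_mono s t : (s <= t)%R -> (ceilN s <= ceilN t)%nat.
Proof. intros H. unfold ceilN. apply up_mono in H. lia. Qed.

Lemma ceilN_spec t : (0 <= t)%R -> (t < INR (ceilN t) /\ INR (ceilN t) <= t + 1)%R.
Proof.
  intros H. destruct (archimed t) as [A1 A2]. unfold ceilN.
  assert (Hp : (0 <= up t)%Z). { apply le_IZR. lra. }
  rewrite INR_IZR_INZ, Z2Nat.id by auto. lra.
Qed.

Lemma exp_pow a k : (exp a ^ k = exp (INR k * a))%R.
Proof.
  induction k; simpl. rewrite Rmult_0_l, exp_0; auto.
  rewrite IHk, <- exp_plus. f_equal. destruct k; simpl; lra.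
Qed.

Section Grp.
Variable G : Group.
Lemma g_assoc (x y z : G) : gmul x (gmul y z) = gmul (gmul x y) z.
Proof. apply (proj1 (gaxioms G)). Qed.
Lemma g_one_l (x : G) : gmul gone x = x.
Proof. apply (proj1 (proj2 (gaxioms G))). Qed.
Lemma g_one_r (x : G) : gmul x gone = x.
Proof. apply (proj1 (proj2 (proj2 (gaxioms G)))). Qed.
Lemma g_inv_l (x : G) : gmul (ginv x) x = gone.
Proof. apply (proj1 (proj2 (proj2 (proj2 (gaxioms G))))). Qed.
Lemma g_inv_r (x : G) : gmul x (ginv x) = gone.
Proof. apply (proj2 (proj2 (proj2 (proj2 (gaxioms G))))). Qed.
Lemma g_cancel (c p : G) : gmul c (gmul (ginv c) p) = p.
Proof. rewrite g_assoc, g_inv_r, g_one_l; auto. Qed.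

Lemma prod_app (w1 w2 : list G) : prod_list (w1 ++ w2) = gmul (prod_list w1) (prod_list w2).
Proof. induction w1; simpl. rewrite g_one_l; auto. rewrite IHw1, g_assoc; auto. Qed.

Lemma wdl_trans S (x y z : G) a b : word_dist_le S x y a -> word_dist_le S y z b -> word_dist_le S x z (a + b).
Proof.
  intros [w1 [H1 [H2 H3]]] [w2 [K1 [K2 K3]]]. exists (w1 ++ w2). rewrite length_app. repeat split.
  lia. apply Forall_app; auto. rewrite prod_app, g_assoc, H3; auto.
Qed.

Lemma wdl_transl S (c x y : G) n : word_dist_le S x y n -> word_dist_le S (gmul c x) (gmul c y) n.
Proof. intros [w [H1 [H2 H3]]]. exists w; repeat split; auto. rewrite <- g_assoc, H3; auto. Qed.

Lemma wdl_transl1 S (c y : G) n : word_dist_le S gone y n -> word_dist_le S c (gmul c y) n.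
Proof. intros H. rewrite <- (g_one_r c) at 1. apply wdl_transl; auto. Qed.

Lemma wdl_refl S (x : G) n : word_dist_le S x x n.
Proof. exists nil; repeat split; simpl; auto. lia. apply g_one_r. Qed.

Lemma gen_wdl S : generates S -> forall g : G, exists n, word_dist_le S gone g n.
Proof. intros H g. destruct (H g) as [w [H1 H2]]. exists (length w), w. repeat split; auto. rewrite g_one_l; auto. Qed.

Lemma wdl_e S (x y : G) n : word_dist_le S x y n -> exists z, word_dist_le S gone z n /\ y = gmul x z.
Proof. intros [w [H1 [H2 H3]]]. exists (prod_list w). split; auto. exists w; repeat split; auto. apply g_one_l. Qed.

End Grp.

Section Wr.
Variables L Q : Group.
Definition cur (x : wreath L Q) : Q := snd x.
Definition lamp (x : wreath L Q) : Q -> L := proj1_sig (fst x).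

Lemma cur_mul (x y : wreath L Q) : cur (gmul x y) = gmul (cur x) (cur y).
Proof. destruct x as [[f Hf] q]; destruct y as [[g Hg] q']; reflexivity. Qed.
Lemma lamp_mul (x y : wreath L Q) p : lamp (gmul x y) p = gmul (lamp x p) (lamp y (gmul (ginv (cur x)) p)).
Proof. destruct x as [[f Hf] q]; destruct y as [[g Hg] q']; reflexivity. Qed.
Lemma cur_one : cur (gone : wreath L Q) = gone. Proof. reflexivity. Qed.
Lemma lamp_one p : lamp (gone : wreath L Q) p = gone. Proof. reflexivity. Qed.

Lemma wr_ext (y z : wreath L Q) : cur y = cur z -> (forall p, lamp y p = lamp z p) -> y = z.
Proof.
  destruct y as [[f Hf] q]; destruct z as [[g Hg] q']; unfold cur, lamp; simpl. intros -> H.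
  assert (f = g) by (apply functional_extensionality; auto). subst g.
  rewrite (proof_irrelevance _ Hf Hg). auto.
Qed.

Variables (SL : list L) (SQ : list Q).
Definition bnd (a : wreath L Q) (B : nat) : Prop :=
  word_dist_le SQ gone (cur a) B /\ (forall p, lamp a p <> gone -> word_dist_le SQ gone p B) /\
  (forall p, word_dist_le SL gone (lamp a p) B).

Lemma bnd_mono a n m : bnd a n -> (n <= m)%nat -> bnd a m.
Proof.
  intros [H1 [H2 H3]] H. split; [|split].
  eapply wdl_mono; eauto. intros; eapply wdl_mono; eauto. intros; eapply wdl_mono; eauto.
Qed.

Hypotheses (HgL : generates SL) (HgQ : generates SQ).

Lemma letter_bounds (a : wreath L Q) : exists B, bnd a B.
Proof.
  destruct a as [[f Hf] q]. destruct Hf as [sf Hsf]. unfold bnd, cur, lamp; simpl.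
  destruct (gen_wdl Q SQ HgQ q) as [M HM].
  destruct (fin_max (fun p n => word_dist_le SQ gone p n) sf) as [K HK].
  { intros; eapply wdl_mono; eauto. }
  { intros; apply gen_wdl; auto. }
  destruct (fin_max (fun p n => word_dist_le SL gone (f p) n) sf) as [A HA].
  { intros; eapply wdl_mono; eauto. }
  { intros; apply gen_wdl; auto. }
  exists (M + K + A)%nat. split; [|split].
  - eapply wdl_mono; eauto; lia.
  - intros p Hp. destruct (classic (In p sf)) as [Hi|Hi].
    + eapply wdl_mono; [apply HK; auto| lia].
    + exfalso; apply Hp, Hsf, Hi.
  - intros p. destruct (classic (In p sf)) as [Hi|Hi].
    + eapply wdl_mono; [apply HA; auto| lia].
    + rewrite (Hsf p Hi). apply wdl_refl.
Qed.

Lemma uniform_bound (S : list (wreath L Q)) : exists B, (1 <= B)%nat /\ forall a, is_letter S a -> bnd a B.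
Proof.
  destruct (fin_max bnd (S ++ map ginv S)) as [B HB].
  { intros; eapply bnd_mono; eauto. }
  { intros; apply letter_bounds. }
  exists (Datatypes.S B). split; [lia|]. intros a [s [Hs [->| ->]]]; (eapply bnd_mono; [apply HB| lia]);
  apply in_or_app; [left; auto| right; apply in_map; auto].
Qed.

Lemma prod_bounds (S : list (wreath L Q)) B (HB : forall a, is_letter S a -> bnd a B) :
  forall w, Forall (is_letter S) w ->
  word_dist_le SQ gone (cur (prod_list w)) (B * length w) /\
  (forall p, lamp (prod_list w) p <> gone -> word_dist_le SQ gone p (B * length w + B)) /\
  (forall p, word_dist_le SL gone (lamp (prod_list w) p) (B * length w)).
Proof.
  induction w as [|a w IH]; intros Hf.
  - change (prod_list nil) with (gone : wreath L Q). split; [|split].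
    + rewrite cur_one. apply wdl_refl.
    + intros p Hp; exfalso; apply Hp; reflexivity.
    + intros p. rewrite lamp_one. apply wdl_refl.
  - inversion Hf as [|? ? Ha Hw]; subst. destruct (IH Hw) as [I1 [I2 I3]].
    destruct (HB a Ha) as [A1 [A2 A3]].
    change (prod_list (a :: w)) with (gmul a (prod_list w)).
    replace (B * length (a :: w))%nat with (B + B * length w)%nat by (simpl; lia).
    split; [|split].
    + rewrite cur_mul. eapply wdl_trans; [exact A1|]. apply wdl_transl1; auto.
    + intros p Hp. rewrite lamp_mul in Hp. destruct (classic (lamp a p = gone)) as [E|E].
      * rewrite E, g_one_l in Hp. specialize (I2 _ Hp).
        apply (wdl_transl1 _ _ (cur a)) in I2. rewrite g_cancel in I2.
        replace (B + B * length w + B)%nat with (B + (B * length w + B))%nat by lia.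
        eapply wdl_trans; eauto.
      * eapply wdl_mono; [apply A2; auto| lia].
    + intros p. rewrite lamp_mul. eapply wdl_trans; [apply A3|]. apply wdl_transl1; auto.
Qed.

Lemma step_main (S : list (wreath L Q)) B (HB : forall a, is_letter S a -> bnd a B) x y n :
  word_dist_le S x y n ->
  word_dist_le SQ (cur x) (cur y) (B * n) /\
  (forall p, lamp y p <> lamp x p -> word_dist_le SQ (cur x) p (B * n + B)) /\
  (forall p, word_dist_le SL (lamp x p) (lamp y p) (B * n)).
Proof.
  intros [w [Hl [Hf Hy]]]. subst y. destruct (prod_bounds S B HB w Hf) as [I1 [I2 I3]].
  assert (Hle : (B * length w <= B * n)%nat) by (apply Nat.mul_le_mono_l; auto).
  split; [|split].
  - rewrite cur_mul. eapply wdl_mono; [apply wdl_transl1; eauto| lia].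
  - intros p Hp. rewrite lamp_mul in Hp.
    destruct (classic (lamp (prod_list w) (gmul (ginv (cur x)) p) = gone)) as [E|E].
    + rewrite E, g_one_r in Hp. tauto.
    + specialize (I2 _ E). apply (wdl_transl1 _ _ (cur x)) in I2. rewrite g_cancel in I2.
      eapply wdl_mono; eauto; lia.
  - intros p. rewrite lamp_mul. eapply wdl_mono; [apply wdl_transl1; eauto| lia].
Qed.
End Wr.

Lemma exp_le a b : (a <= b)%R -> (exp a <= exp b)%R.
Proof. intros H. destruct (Rle_lt_or_eq_dec a b H) as [H' | ->]; [left; apply exp_increasing; auto| lra]. Qed.

Lemma beta_exists (Pc : nat -> nat -> Prop) : (forall m, exists k, Pc m k) ->
  exists beta : nat -> nat, forall m, Pc m (beta m) /\ forall k, Pc m k -> (beta m <= k)%nat.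
Proof.
  intros H. exists (fun m => proj1_sig (constructive_indefinite_description _ (least_nat _ (H m)))).
  intros m. destruct (constructive_indefinite_description _ _) as [b Hb]; exact Hb.
Qed.

Theorem corollary1p8 (L Q : Group) (SL : list L) (SQ : list Q) (n : nat) :
  generates SL -> subexp_growth SL ->
  generates SQ -> asdim_le SQ n ->
  forall S : list (wreath L Q), generates S -> asdim_se_le S n.
Proof.
  intros HgL HsubL HgQ HasQ S HgS r Hr.
  destruct (uniform_bound L Q SL SQ HgL HgQ S) as [B [HB1 HB]].
  set (rN := ceilN r). set (R0 := (B + B * rN)%nat).
  destruct (HasQ (INR (B * rN)) (pos_INR _)) as [J [P [Hcov [Hdisj [D HD]]]]].
  set (N := fun i j p => exists u, P i j u /\ word_dist_le SQ u p R0).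
  destruct (beta_exists (fun m k => exists l : list L, length l = k /\ forall y, word_dist_le SL gone y m -> In y l))
    as [beta Hbeta].
  { intros m. exists (length (map (gmul gone) (ball L SL m))), (map (gmul gone) (ball L SL m)).
    split; auto. intros y Hy. apply ball_in; auto. }
  assert (beta_mono : forall m m', (m <= m')%nat -> (beta m <= beta m')%nat).
  { intros m m' Hm. apply (proj2 (Hbeta m)). destruct (proj1 (Hbeta m')) as [l [Hl Hc]].
    exists l; split; auto. intros y Hy; apply Hc; eapply wdl_mono; eauto. }
  set (K0 := length (ball Q SQ (D + R0))). set (KQ := length (ball Q SQ D)).
  set (V := fun t => (INR (beta (B * ceilN t)%nat) ^ K0)%R).
  assert (Vmono : forall s t, (s <= t)%R -> (V s <= V t)%R).
  { intros s t Hst. unfold V. apply pow_incr. split; [apply pos_INR|]. apply le_INR.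
    apply beta_mono. apply Nat.mul_le_mono_l, ceilN_mono; auto. }
  assert (Vpos : forall t, (0 <= V t)%R). { intros t; unfold V; apply pow_le, pos_INR. }
  exists (J * (Q -> L))%type.
  exists (fun i jh (x : wreath L Q) => P i (fst jh) (cur L Q x) /\
     forall p, (~ N i (fst jh) p -> lamp L Q x p = snd jh p) /\ (N i (fst jh) p -> snd jh p = gone)).
  split; [|split].
  - intros x. destruct (Hcov (cur L Q x)) as [i [j [Hi Hij]]].
    exists i, (j, fun p => if excluded_middle_informative (N i j p) then gone else lamp L Q x p).
    split; auto. simpl. split; auto. intros p.
    destruct (excluded_middle_informative (N i j p)); tauto.
  - intros i Hi [j h] [j' h'] Hne x y [Px Hx] [Py Hy]. simpl in *.
    destruct (ceilN_spec r Hr) as [Hr1 Hr2]. fold rN in Hr1, Hr2.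
    destruct (classic (j = j')) as [<-|Hjj].
    + assert (Hh : h <> h') by (intro; subst; auto).
      assert (exists p, h p <> h' p) as [p Hp].
      { apply NNPP; intro Hn; apply Hh; apply functional_extensionality; intro p.
        apply NNPP; intro; apply Hn; exists p; auto. }
      assert (HnN : ~ N i j p).
      { intro HN; apply Hp; rewrite (proj2 (Hx p) HN), (proj2 (Hy p) HN); auto. }
      rewrite <- (proj1 (Hx p) HnN), <- (proj1 (Hy p) HnN) in Hp.
      split; [intro; subst; auto|].
      intros m Hm. destruct (step_main L Q SL SQ S B HB x y m Hm) as [_ [S2 _]].
      specialize (S2 p (not_eq_sym Hp)).
      destruct (Compare_dec.le_lt_dec m rN) as [Hle|Hlt].
      * exfalso; apply HnN. exists (cur L Q x); split; auto. eapply wdl_mono; eauto.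
        unfold R0. nia.
      * apply lt_INR in Hlt. lra.
    + destruct (Hdisj i Hi j j' Hjj (cur L Q x) (cur L Q y) Px Py) as [Hc Hd].
      split; [intro; subst; auto|].
      intros m Hm. destruct (step_main L Q SL SQ S B HB x y m Hm) as [S1 _].
      specialize (Hd _ S1). apply INR_le in Hd.
      assert (rN <= m)%nat by nia. apply le_INR in H. lra.
  - exists V, (INR (KQ + 1)). split; [|split; [exact Vmono|]].
    +
      intros eps Heps. set (c := INR (K0 * B)).
      assert (Hc0 : (0 <= c)%R) by apply pos_INR.
      set (e1 := (eps / (2 * (c + 1)))%R).
      assert (He1 : (0 < e1)%R) by (unfold e1; apply Rdiv_lt_0_compat; lra).
      assert (He1' : (e1 * (2 * (c + 1)) = eps)%R) by (unfold e1; field; lra).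
      destruct (HsubL e1 He1) as [N1 HN1]. exists (Rmax 1 (INR N1)). intros t Ht.
      assert (Ht1 : (1 <= t)%R) by (eapply Rle_trans; [apply Rmax_l| exact Ht]).
      assert (Ht2 : (INR N1 <= t)%R) by (eapply Rle_trans; [apply Rmax_r| exact Ht]).
      destruct (ceilN_spec t ltac:(lra)) as [Hu1 Hu2].
      set (u := ceilN t) in *.
      assert (Hum : (u <= B * u)%nat) by nia.
      assert (HNm : (N1 <= B * u)%nat).
      { apply INR_le. apply le_INR in Hum. lra. }
      destruct (HN1 _ HNm) as [l [Hl Hlc]].
      assert (Hb : (beta (B * u) <= length l)%nat).
      { apply (proj2 (Hbeta _)). exists l; split; auto. }
      apply le_INR in Hb.
      unfold V. fold u.
      eapply Rle_trans. { apply pow_incr. split; [apply pos_INR|]. eapply Rle_trans; [exact Hb| exact Hl]. }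
      rewrite exp_pow. apply exp_le.
      rewrite mult_INR.
      assert (HB0 : (0 <= INR B)%R) by apply pos_INR.
      assert (HK0 : (0 <= INR K0)%R) by apply pos_INR.
      assert (Hcc : c = (INR K0 * INR B)%R) by (unfold c; apply mult_INR).
      assert (H1 : (INR K0 * (e1 * (INR B * INR u)) <= e1 * c * (t + 1))%R).
      { rewrite Hcc. assert (0 <= INR K0 * INR B)%R by nra.
        assert (INR u <= t + 1)%R by lra.
        replace (INR K0 * (e1 * (INR B * INR u)))%R with ((e1 * (INR K0 * INR B)) * INR u)%R by ring.
        apply Rmult_le_compat_l; nra. }
      assert (H2 : (e1 * c * 2 <= eps)%R) by (rewrite <- He1'; nra).
      nra.
    + intros i [j h] x rho Hi [Px Hx] Hrho. simpl in *.
      set (nr := ceilN rho). destruct (proj1 (Hbeta (B * nr)%nat)) as [bl [Hbl Hblc]].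
      destruct (ceilN_spec rho Hrho) as [Hn1 Hn2]. fold nr in Hn1, Hn2.
      set (nl := map (gmul (cur L Q x)) (ball Q SQ (D + R0))).
      set (cl := map (gmul (cur L Q x)) (ball Q SQ D)).
      set (ls := map (fun p => map (gmul (lamp L Q x p)) bl) nl).
      set (lk := list_prod cl (cart ls)).
      assert (HN_nl : forall p, N i j p -> In p nl).
      { intros p [u [Pu Hu]]. apply ball_in. eapply wdl_trans; [apply (HD i j (cur L Q x) u Hi Px Pu) | exact Hu]. }
      assert (Hcard : card_le (fun y : wreath L Q => (P i j (cur L Q y) /\
         (forall p, (~ N i j p -> lamp L Q y p = h p) /\ (N i j p -> h p = gone))) /\ @dist_leR (wreath L Q) S x y rho)
         (INR (length lk))).
      { apply (card_le_inj _ (fun y : wreath L Q => (cur L Q y, map (lamp L Q y) nl)) lk x).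
        - intros y [[Py Hy] [m [Hm Hmr]]]. apply in_prod.
          + unfold cl; apply ball_in. exact (HD i j (cur L Q x) (cur L Q y) Hi Px Py).
          + unfold ls; apply cart_in. intros p _.
            destruct (step_main L Q SL SQ S B HB x y m Hm) as [_ [_ S3]].
            destruct (wdl_e _ _ _ _ _ (S3 p)) as [z [Hz ->]]. apply in_map. apply Hblc.
            eapply wdl_mono; eauto. assert (m < nr)%nat by (apply INR_lt; lra). nia.
        - intros y z [[Py Hy] _] [[Pz Hz] _] Heq. injection Heq as E1 E2. apply wr_ext; auto.
          intros p. destruct (classic (N i j p)) as [HN|HN].
          + apply (map_eq_in _ _ _ E2 p (HN_nl p HN)).
          + rewrite (proj1 (Hy p) HN), (proj1 (Hz p) HN); auto. }
      destruct Hcard as [l [Hl Hlc]]. exists l. split; [|exact Hlc].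
      eapply Rle_trans; [exact Hl|].
      unfold lk. rewrite length_prod. unfold cl. rewrite length_map.
      rewrite (cart_len ls (beta (B * nr)%nat)).
      2:{ intros l' Hl'. unfold ls in Hl'. apply in_map_iff in Hl'. destruct Hl' as [p [<- _]].
          rewrite length_map; auto. }
      unfold ls, nl. rewrite !length_map. fold KQ K0.
      rewrite mult_INR, pow_INR.
      assert (HV : (INR (beta (B * nr)%nat) ^ K0 = V rho)%R) by reflexivity.
      rewrite HV.
      assert (HC1 : (1 <= INR (KQ + 1))%R) by (rewrite plus_INR; simpl; pose proof (pos_INR KQ); lra).
      assert (HKQ : (INR KQ <= INR (KQ + 1))%R) by (apply le_INR; lia).
      assert (Hm : (V rho <= V (INR (KQ + 1) * rho))%R) by (apply Vmono; nra).
      pose proof (Vpos rho). pose proof (pos_INR KQ). nra.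
Qed.
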